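(* Let $S$ be any set and $s,s':I_m\to S$. If $s$ and $s'$ are mirrored, then $(s,s')$ is a special pair.
   Context: $\mathscr{T}_m=\{\sigma\in\mathcal{S}_m \mid \exists t:\ \sigma(1)>\cdots>\sigma(t)=1,\ \sigma(t)<\cdots<\sigma(m)\}$, $\mathcal{S}_m$ acting on sequences $s:I_m\to S$ by $\sigma s=s\circ\sigma^{-1}$. $(\mathrm{rev}\,s)(i)=s(m+1-i)$. Two sequences $s,s'$ are mirrored if for every $\sigma\in\mathscr{T}_m$ there is $\sigma'\in\mathscr{T}_m$ with $\sigma s=\sigma's'$, and for every $\tau'\in\mathscr{T}_m$ there is $\tau\in\mathscr{T}_m$ with $\tau's'=\tau s$. An element $A\in\mathrm{Im}\,s$ is direct for $(s,s')$ if $s'(i)=A$ for all $i\in s^{-1}(A)$, and reverse for $(s,s')$ if $(\mathrm{rev}\,s')(i)=A$ for all $i\in s^{-1}(A)$. The pair $(s,s')$ is special if every $A\in\mathrm{Im}\,s$ is direct or reverse for $(s,s')$. *)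

(* Defs.v *)
(* I_m = {1..m} is rendered as 'I_m = {0..m-1} (shift by 1). *)
From mathcomp Require Import all_boot all_fingroup.
Set Implicit Arguments. Unset Strict Implicit. Unset Printing Implicit Defensive.
Local Open Scope group_scope.

Definition Tperm (m : nat) (sigma : 'S_m) : Prop :=
  exists t : 'I_m,
    (nat_of_ord (sigma t) = 0)%N /\
    (forall i j : 'I_m, (i < j)%N -> (j <= t)%N -> (sigma j < sigma i)%N) /\
    (forall i j : 'I_m, (t <= i)%N -> (i < j)%N -> (sigma i < sigma j)%N).

Definition pact (S : Type) (m : nat) (sigma : 'S_m) (s : 'I_m -> S) : 'I_m -> S :=
  fun i => s (sigma^-1 i).

Definition rev_seq (S : Type) (m : nat) (s : 'I_m -> S) : 'I_m -> S :=
  fun i => s (rev_ord i).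

Definition mirrored (S : Type) (m : nat) (s s' : 'I_m -> S) : Prop :=
  (forall sigma : 'S_m, Tperm sigma ->
     exists sigma' : 'S_m, Tperm sigma' /\ pact sigma s = pact sigma' s') /\
  (forall tau' : 'S_m, Tperm tau' ->
     exists tau : 'S_m, Tperm tau /\ pact tau' s' = pact tau s).

Definition in_image (S : Type) (m : nat) (s : 'I_m -> S) (A : S) : Prop :=
  exists i : 'I_m, s i = A.

Definition direct (S : Type) (m : nat) (s s' : 'I_m -> S) (A : S) : Prop :=
  forall i : 'I_m, s i = A -> s' i = A.

Definition reverse (S : Type) (m : nat) (s s' : 'I_m -> S) (A : S) : Prop :=
  forall i : 'I_m, s i = A -> rev_seq s' i = A.

Definition special (S : Type) (m : nat) (s s' : 'I_m -> S) : Prop :=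
  forall A : S, in_image s A -> direct s s' A \/ reverse s s' A.

(* Main.v *)
Require Import Defs.
From mathcomp Require Import all_boot all_fingroup zify.
From Stdlib Require Import ClassicalEpsilon.
Set Implicit Arguments. Unset Strict Implicit. Unset Printing Implicit Defensive.

Inductive Pop {T : Type} : seq T -> seq T -> Prop :=
| Pop0 : Pop [::] [::]
| PopL a u q : Pop u q -> Pop (a :: u) (a :: q)
| PopR a u q : Pop u q -> Pop (rcons u a) (a :: q).

Section PopT.
Variable T : eqType.
Implicit Types u q : seq T.

Lemma Pop_perm u q : Pop u q -> perm_eq u q.
Proof.
elim=> //= a u' q' _ IH; first by rewrite perm_cons.
by rewrite perm_rcons perm_cons.
Qed.

Lemma Pop_self u : Pop u u.
Proof. by elim: u => [|a u IH]; constructor. Qed.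

Lemma Pop_rev u : Pop u (rev u).
Proof.
elim/last_ind: u => [|u a IH]; first by constructor.
by rewrite rev_rcons; constructor.
Qed.

Lemma Pop_revE u q : Pop u q -> Pop (rev u) q.
Proof.
elim=> [|a u' q' _ IH|a u' q' _ IH]; first by constructor.
  by rewrite rev_cons; constructor.
by rewrite rev_rcons; constructor.
Qed.

Lemma Pop_rev_iff u q : Pop (rev u) q <-> Pop u q.
Proof. by split=> [/Pop_revE|/Pop_revE]; rewrite ?revK. Qed.

Lemma Pop_inv u d q : Pop u (d :: q) ->
  (exists2 u', u = d :: u' & Pop u' q) \/ (exists2 u', u = rcons u' d & Pop u' q).
Proof.
move=> H; inversion H; subst; [left|right]; by exists u0.
Qed.

Lemma Pop_nil u : Pop u [::] -> u = [::].
Proof. by move/Pop_perm/perm_size; case: u. Qed.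

Lemma Pop_nseq n a q : Pop (nseq n a) q -> q = nseq n a.
Proof.
move=> /Pop_perm H; have Hs := perm_size H; rewrite size_nseq in Hs.
rewrite Hs; apply/all_pred1P; apply/allP => x; rewrite -(perm_mem H).
by rewrite mem_nseq => /andP[_].
Qed.

End PopT.


Section Core.
Variable T : eqType.
Implicit Types u q z : seq T.

Lemma nseqSr n (a : T) : nseq n.+1 a = rcons (nseq n a) a.
Proof. by elim: n => //= n ->. Qed.

Lemma nseqS_cat n (a : T) q : nseq n.+1 a ++ q = nseq n a ++ a :: q.
Proof. by rewrite nseqSr cat_rcons. Qed.

Variables (a c d : T) (z1 z2 : seq T).
Hypothesis (ca : c != a) (da : d != a) (Hz : c :: z1 = rcons z2 d).

Let z := c :: z1.

Lemma Erc p r : nseq p a ++ z ++ nseq r.+1 a = rcons (nseq p a ++ z ++ nseq r a) a.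
Proof. by rewrite nseqSr !rcons_cat. Qed.

Lemma strip n p r q : p + r = n ->
  (Pop (nseq p a ++ z ++ nseq r a) (nseq n a ++ q) <-> Pop z q).
Proof.
elim: n p r => [|n IH] p r Hn.
  have [-> ->] : p = 0 /\ r = 0 by lia.
  by rewrite /= cats0.
split.
  move=> /Pop_inv [[u' Hu Hp]|[u' Hu Hp]].
    case: p Hn Hu => [|p] Hn /= Hu.
      by move: Hu; rewrite /z /= => [[Hc]]; move: ca; rewrite Hc eqxx.
    have Hn' : p + r = n by lia.
    by case: Hu => Hu; rewrite -Hu in Hp; apply/(IH p r Hn').
  case: r Hn Hu => [|r] Hn Hu.
    move: Hu; rewrite cats0 /z Hz -rcons_cat => /rcons_inj [_ Hd].
    by move: da; rewrite Hd eqxx.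
  have E : nseq p a ++ z ++ nseq r.+1 a = rcons (nseq p a ++ z ++ nseq r a) a.
    by rewrite nseqSr !rcons_cat.
  move: Hu; rewrite E => /rcons_inj [Hu].
  have Hn' : p + r = n by lia.
  by rewrite -Hu in Hp; apply/(IH p r Hn').
move=> Hq.
case: p Hn => [|p] Hn.
  case: r Hn => [|r] Hn //.
  rewrite Erc; apply: PopR.
  have Hn' : 0 + r = n by lia.
  by apply/(IH 0 r Hn').
have Hn' : p + r = n by lia.
by rewrite /=; constructor; apply/(IH p r Hn').
Qed.

Lemma no_more p r q :
  ~ Pop (nseq p a ++ z ++ nseq r a) (nseq (p + r).+1 a ++ q).
Proof.
rewrite nseqS_cat => /(@strip (p + r) p r (a :: q) (erefl _)) /Pop_inv [[u' Hu _]|[u' Hu _]].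
  by case: Hu => Hc; move: ca; rewrite Hc eqxx.
by move: Hu; rewrite /z Hz => /rcons_inj [_ Hd]; move: da; rewrite Hd eqxx.
Qed.

Lemma min_le (b : T) k : b != a -> forall p r q,
  Pop (nseq p a ++ z ++ nseq r a) (nseq k a ++ b :: q) -> minn p r <= k.
Proof.
move=> ba; elim: k => [|k IH] p r q /=.
  move=> /Pop_inv [[u' Hu _]|[u' Hu _]].
    case: p Hu => [|p] Hu; first by rewrite min0n.
    by case: Hu => Hb; rewrite Hb eqxx in ba.
  case: r Hu => [|r] Hu; first by rewrite minn0.
  by move: Hu; rewrite Erc => /rcons_inj [_ Hb]; rewrite Hb eqxx in ba.
move=> /Pop_inv [[u' Hu Hp]|[u' Hu Hp]].
  case: p Hu => [|p] /= Hu.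
    by move: Hu; rewrite /z => [[Hc]]; move: ca; rewrite Hc eqxx.
  case: Hu => Hu; rewrite -Hu in Hp; have := IH _ _ _ Hp; lia.
case: r Hu => [|r] Hu.
  by move: Hu; rewrite cats0 /z Hz -rcons_cat => /rcons_inj [_ Hd]; move: da; rewrite Hd eqxx.
move: Hu; rewrite Erc => /rcons_inj [Hu]; rewrite -Hu in Hp.
have := IH _ _ _ Hp; lia.
Qed.

End Core.


Section Peel.
Variable T : eqType.
Variables (a b d : T) (z1 z2 : seq T).
Hypothesis (ba : b != a) (da : d != a) (Hz : b :: z1 = rcons z2 d).

Lemma Erc' p r : nseq p a ++ (b :: z1) ++ nseq r.+1 a
   = rcons (nseq p a ++ (b :: z1) ++ nseq r a) a.
Proof. by rewrite nseqSr !rcons_cat. Qed.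

Lemma peel i j q : i < j ->
  Pop (nseq i a ++ (b :: z1) ++ nseq j a) (nseq i a ++ b :: q) ->
  Pop (z1 ++ nseq j a) q.
Proof.
elim: i j => [|i IH] j ij /=.
  move=> /Pop_inv [[u' [Hu] Hp]|[u' Hu Hp]]; first by rewrite -Hu in Hp.
  case: j ij Hu => [|j] // _.
  have -> : b :: z1 ++ nseq j.+1 a = rcons (b :: z1 ++ nseq j a) a.
    by rewrite nseqSr /= -rcons_cat.
  by move=> /rcons_inj [_ Hb]; move: ba; rewrite Hb eqxx.
move=> /Pop_inv [[u' [Hu] Hp]|[u' Hu Hp]].
  by rewrite -Hu in Hp; apply: IH Hp; lia.
case: j ij Hu => [|j] // ij.
have := Erc' i.+1 j; rewrite /= => ->.
rewrite -rcons_cons => /rcons_inj [Hu]; rewrite -Hu in Hp.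
have := @min_le _ a b d z1 z2 ba da Hz b i ba i.+1 j q Hp; lia.
Qed.

Lemma peel_back i j q : Pop (z1 ++ nseq j a) q ->
  Pop (nseq i a ++ (b :: z1) ++ nseq j a) (nseq i a ++ b :: q).
Proof. by move=> H; elim: i => [|i IH] /=; constructor. Qed.

End Peel.

Lemma E_uniq (T : eqType) (a b c c' : T) j Z Y X Z' Y' X' :
  Z = b :: Y -> Z = rcons X c -> Y ++ nseq j a = nseq j a ++ X ->
  Z' = b :: Y' -> Z' = rcons X' c' -> Y' ++ nseq j a = nseq j a ++ X' ->
  size Z = size Z' -> Z = Z'.
Proof.
move=> E1 E2 E3 E1' E2' E3' Hs.
have key : forall W V U e, W = b :: V -> W = rcons U e -> V ++ nseq j a = nseq j a ++ U ->
   forall k, k.+1 < size W -> nth a W k.+1 = if k < j then a else nth a W (k - j).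
  move=> W V U e EW HW HV k Hk.
  have HsW : size W = (size U).+1 by rewrite HW size_rcons.
  have HsW' : size W = (size V).+1 by rewrite EW.
  have -> : nth a W k.+1 = nth a V k by rewrite EW.
  have : nth a (V ++ nseq j a) k = nth a (nseq j a ++ U) k by rewrite HV.
  rewrite nth_cat (_ : k < size V); last by lia.
  move=> ->; rewrite nth_cat size_nseq nth_nseq.
  case: ifP => kj; first by case: ifP.
  by rewrite HW nth_rcons (_ : k - j < size U); last by lia.
apply: (@eq_from_nth _ a) => // k Hk.
elim/ltn_ind: k Hk => k IH Hk.
case: k IH Hk => [|k] IH Hk; first by rewrite E1 E1'.
rewrite (key _ _ _ _ E1 E2 E3 k Hk) (key _ _ _ _ E1' E2' E3' k); last by rewrite -Hs.
case: ifP => // _; apply: IH; lia.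
Qed.


Lemma catIs' (T : eqType) (s1 s2 t : seq T) : s1 ++ t = s2 ++ t -> s1 = s2.
Proof.
move=> E; have Hs : size s1 = size s2 by have := congr1 size E; rewrite !size_cat; lia.
by move/eqP: E; rewrite eqseq_cat // => /andP[/eqP].
Qed.

Lemma nega (a : bool) : ~~ a != a. Proof. by case: a. Qed.

Lemma pre (a : bool) u : exists i w, u = nseq i a ++ w /\
  (w = [::] \/ exists w1, w = (~~ a) :: w1).
Proof.
elim: u => [|x u [i [w [Eu Hw]]]]; first by exists 0, [::]; split => //; left.
case: (boolP (x == a)) => [/eqP Hx|xa].
  by exists i.+1, w; rewrite Eu Hx.
exists 0, (x :: u); split => //; right; exists u.
by move: xa; case: x; case: (a) => /=.
Qed.

Lemma decomp (a : bool) u : exists i j z, u = nseq i a ++ z ++ nseq j a /\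
  (z = [::] \/ exists z1 z2, z = (~~a) :: z1 /\ z = rcons z2 (~~a)).
Proof.
have [i [w [Eu [Hw0|[w1 Ew]]]]] := pre a u.
  by exists i, 0, [::]; split => //; [rewrite Eu Hw0 cats0 | left].
have [j [w' [Ew' [Hw'|[w1' Hw1']]]]] := pre a (rev w).
  exfalso; move: Ew'; rewrite Hw' cats0 => Ew'.
  have : ~~ a \in rev w by rewrite mem_rev Ew mem_head.
  by rewrite Ew' mem_nseq => /andP[_]; rewrite (negPf (nega a)).
have Ew2 : w = rev w' ++ nseq j a by rewrite -rev_nseq -rev_cat -Ew' revK.
exists i, j, (rev w'); split; first by rewrite Eu Ew2.
right; exists (behead (rev w')), (rev w1'); split; last by rewrite Hw1' rev_cons.
move: Ew2; rewrite Ew Hw1' rev_cons; case: (rev w1') => [|y ys] //=.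
by case=> Hy _; rewrite -Hy.
Qed.

Definition PEq (u v : seq bool) := forall q, Pop u q <-> Pop v q.

Lemma bad n (IH : forall u v : seq bool, size u <= n -> PEq u v -> v = u \/ v = rev u)
  (a : bool) i j z1 z2 : i < j -> ~~a :: z1 = rcons z2 (~~a) ->
  i + (size z1).+1 + j <= n.+1 ->
  PEq (nseq i a ++ (~~a :: z1) ++ nseq j a) (nseq i a ++ rev (~~a :: z1) ++ nseq j a) ->
  rev (~~a :: z1) = ~~a :: z1.
Proof.
move=> ij Hz Hs H.
have R1 : rev (~~a :: z1) = ~~a :: rev z2 by rewrite Hz rev_rcons.
have R2 : rev (~~a :: z1) = rcons (rev z1) (~~a) by rewrite rev_cons.
have R3 : ~~a :: rev z2 = rcons (rev z1) (~~a) by rewrite -R1.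
have P : PEq (z1 ++ nseq j a) (rev z2 ++ nseq j a).
  move=> q; split=> Hq.
    have := (peel_back (~~a) i Hq); rewrite H R1.
    exact: (peel (nega a) (nega a) R3 ij).
  have := (peel_back (~~a) i Hq); rewrite -R1 -H.
  exact: (peel (nega a) (nega a) Hz ij).
have Hsz : size (z1 ++ nseq j a) <= n by rewrite size_cat size_nseq; lia.
have [E|E] := IH _ _ Hsz P; first by rewrite R1 (catIs' E).
rewrite rev_cat rev_nseq in E.
apply: (E_uniq R1 R2 E (erefl _) Hz); last by rewrite size_rev.
apply: (can_inj (@revK _)); rewrite !rev_cat !rev_nseq.
exact: esym E.
Qed.

Lemma bad2 n (IH : forall u v : seq bool, size u <= n -> PEq u v -> v = u \/ v = rev u)
  (a : bool) i j z1 z2 : i != j -> ~~a :: z1 = rcons z2 (~~a) ->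
  i + (size z1).+1 + j <= n.+1 ->
  PEq (nseq i a ++ (~~a :: z1) ++ nseq j a) (nseq i a ++ rev (~~a :: z1) ++ nseq j a) ->
  rev (~~a :: z1) = ~~a :: z1.
Proof.
move=> ij Hz Hs H.
case: (ltngtP i j) ij => // ij _; first exact: (bad IH ij Hz Hs H).
have R1 : rev (~~a :: z1) = ~~a :: rev z2 by rewrite Hz rev_rcons.
have R2 : rev (~~a :: z1) = rcons (rev z1) (~~a) by rewrite rev_cons.
have R3 : ~~a :: rev z2 = rcons (rev z1) (~~a) by rewrite -R1.
suff : rev (~~a :: rev z2) = ~~a :: rev z2.
  by move=> E; rewrite -{2}(revK (~~a :: z1)) R1 E.
apply: (bad IH ij R3).
  by rewrite size_rev (_ : size z2 = size z1); [lia | have := congr1 size Hz; rewrite size_rcons /=; lia].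
move=> q; rewrite -R1 revK.
have E1 : nseq j a ++ rev (~~a :: z1) ++ nseq i a = rev (nseq i a ++ (~~a :: z1) ++ nseq j a).
  by rewrite !rev_cat !rev_nseq catA.
have E2 : nseq j a ++ (~~a :: z1) ++ nseq i a = rev (nseq i a ++ rev (~~a :: z1) ++ nseq j a).
  by rewrite !rev_cat !rev_nseq revK catA.
by rewrite E1 E2 !Pop_rev_iff; exact: H q.
Qed.

Lemma PEq_sym u v : PEq u v -> PEq v u.
Proof. by move=> H q; split => /H. Qed.

Lemma core n : forall u v : seq bool, size u <= n -> PEq u v -> v = u \/ v = rev u.
Proof.
elim: n => [|n IH] u v Hs H.
  have Eu : u = [::] by case: u Hs H.
  by left; rewrite Eu; apply: Pop_nil; apply/H; rewrite Eu; constructor.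
case: u Hs H => [|a u0] Hs H.
  by left; apply: Pop_nil; apply/H; constructor.
set u := a :: u0 in Hs H *.
have Hvu : Pop u v by apply/H; exact: Pop_self.
have Huv : Pop v u by apply/H; exact: Pop_self.
have [i [j [z [Eu [Hz|[z1 [z2 [Ez1 Ez2]]]]]]]] := decomp a u.
  by left; move: Hvu; rewrite Eu Hz /= -nseqD => /Pop_nseq.
have [i' [j' [z' [Ev [Hz'|[y1 [y2 [Ey1 Ey2]]]]]]]] := decomp a v.
  move: Huv; rewrite Ev Hz' /= -nseqD => /Pop_nseq Eu'.
  have : ~~ a \in u by rewrite Eu Ez1 !mem_cat mem_head orbT.
  by rewrite Eu' mem_nseq => /andP[_]; rewrite (negPf (nega a)).
have Hi : 0 < i.
  case: i Eu => // Eu; move: Eu; rewrite /u Ez1 /= => -[Ha].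
  by move: (nega a); rewrite -Ha eqxx.
have Hz1 : ~~a :: z1 = rcons z2 (~~a) by rewrite -Ez1 -Ez2.
have Hy1 : ~~a :: y1 = rcons y2 (~~a) by rewrite -Ey1 -Ey2.
have Hsum : i + j = i' + j'.
  have A1 : forall (p r p' r' : nat) (w1 w2 w1' w2' : seq bool),
      ~~a :: w1 = rcons w2 (~~a) -> ~~a :: w1' = rcons w2' (~~a) ->
      PEq (nseq p a ++ (~~a :: w1) ++ nseq r a) (nseq p' a ++ (~~a :: w1') ++ nseq r' a) ->
      p + r <= p' + r'.
    move=> p r p' r' w1 w2 w1' w2' E1 E1' HH.
    have P1 : Pop (nseq p a ++ (~~a :: w1) ++ nseq r a) (nseq (p + r) a ++ (~~a :: w1)).
      by apply/(strip (nega a) (nega a) E1 _ (erefl _)); exact: Pop_self.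
    move/HH: P1; case: (leqP (p + r) (p' + r')) => // lt.
    have -> : p + r = (p' + r').+1 + (p + r - (p' + r').+1) by lia.
    by rewrite nseqD -catA => /(no_more (nega a) (nega a) E1').
  move: H; rewrite Eu Ev Ez1 Ey1 => H.
  by apply/eqP; rewrite eqn_leq (A1 _ _ _ _ _ _ _ _ Hz1 Hy1 H) (A1 _ _ _ _ _ _ _ _ Hy1 Hz1 (PEq_sym H)).
have Hzz : PEq z z'.
  move=> q; rewrite Ez1 Ey1.
  rewrite -(strip (nega a) (nega a) Hz1 q (erefl (i + j))).
  rewrite -(strip (nega a) (nega a) Hy1 q (erefl (i' + j'))) -Hsum.
  by rewrite -Ez1 -Ey1 -Eu -Ev.
have Hszz : size z <= n.
  by move: Hs; rewrite Eu !size_cat !size_nseq; lia.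
have Hzc := IH _ _ Hszz Hzz.
have Hmin : minn i j = minn i' j'.
  have M : forall (p r p' r' : nat) (w1 w2 w1' w2' : seq bool),
      ~~a :: w1 = rcons w2 (~~a) -> ~~a :: w1' = rcons w2' (~~a) ->
      PEq (nseq p a ++ (~~a :: w1) ++ nseq r a) (nseq p' a ++ (~~a :: w1') ++ nseq r' a) ->
      minn p' r' <= minn p r.
    move=> p r p' r' w1 w2 w1' w2' E1 E1' HH.
    have P1 := Pop_self (nseq p a ++ (~~a :: w1) ++ nseq r a).
    have P2 := Pop_rev (nseq p a ++ (~~a :: w1) ++ nseq r a).
    move/HH: P1 => P1.
    have m1 := @min_le _ _ _ _ _ _ (nega a) (nega a) E1' (~~a) p (nega a) _ _ (w1 ++ nseq r a) P1.
    move/HH: P2; rewrite !rev_cat !rev_nseq E1 rev_rcons -catA => P2.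
    have m2 := @min_le _ _ _ _ _ _ (nega a) (nega a) E1' (~~a) r (nega a) _ _ _ P2.
    by rewrite leq_min m1 m2.
  move: H; rewrite Eu Ev Ez1 Ey1 => H.
  by apply/eqP; rewrite eqn_leq (M _ _ _ _ _ _ _ _ Hz1 Hy1 H) (M _ _ _ _ _ _ _ _ Hy1 Hz1 (PEq_sym H)).
have Hij : (i' = i /\ j' = j) \/ (i' = j /\ j' = i) by lia.
have Hsu : i + (size z1).+1 + j <= n.+1.
  by move: Hs; rewrite Eu Ez1 !size_cat !size_nseq /=; lia.
have RU : rev u = nseq j a ++ rev z ++ nseq i a by rewrite Eu !rev_cat !rev_nseq catA.
case: Hij => [[Hi1 Hj1]|[Hi1 Hj1]]; rewrite Hi1 Hj1 in Ev; case: Hzc => Ez.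
- by left; rewrite Ev Ez Eu.
- case: (eqVneq i j) => [eij|nij].
    by right; rewrite RU Ev Ez eij.
  have E := bad2 IH nij Hz1 Hsu.
  left; rewrite Ev Ez Eu Ez1 E //.
  by move: H; rewrite Eu Ev Ez Ez1.
- case: (eqVneq i j) => [eij|nij].
    by left; rewrite Ev Ez Eu eij.
  have E := bad2 IH nij Hz1 Hsu.
  right; rewrite RU Ev Ez Ez1 E //.
  have E2 : nseq i a ++ rev (~~a :: z1) ++ nseq j a = rev v.
    by rewrite Ev Ez Ez1 !rev_cat !rev_nseq catA.
  by move=> q; rewrite E2 Pop_rev_iff -Ez1 -Eu.
- by right; rewrite RU Ev Ez.
Qed.


Section Link.
Variable m : nat.
Variable x : 'I_m -> bool.

Definition lst (y : 'I_m -> bool) := [seq y i | i <- enum 'I_m].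
Let L := lst x.
Definition slice l r := [seq nth false L k | k <- iota l (r - l)].

Lemma size_lst y : size (lst y) = m.
Proof. by rewrite size_map size_enum_ord. Qed.

Lemma nth_lst y k (H : k < m) : nth false (lst y) k = y (Ordinal H).
Proof.
rewrite (nth_map (Ordinal H)) ?size_enum_ord //; congr y.
by apply: val_inj; rewrite /= nth_enum_ord.
Qed.

Lemma slice0m : slice 0 m = L.
Proof. by rewrite /slice subn0 -{1}(size_lst x) -/L; exact: mkseq_nth. Qed.

Lemma sliceL l r : l < r -> slice l r = nth false L l :: slice l.+1 r.
Proof. by move=> H; rewrite /slice (_ : r - l = (r - l.+1).+1) //; lia. Qed.

Lemma sliceR l r : l <= r -> slice l r.+1 = rcons (slice l r) (nth false L r).
Proof.
move=> H; rewrite /slice (_ : r.+1 - l = (r - l) + 1); last by lia.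
by rewrite iotaD map_cat /= cats1 (_ : l + (r - l) = r) //; lia.
Qed.

Lemma size_slice l r : size (slice l r) = r - l.
Proof. by rewrite size_map size_iota. Qed.

End Link.



Lemma L1 m (x : 'I_m -> bool) (s : 'S_m) : Tperm s ->
  Pop (lst x) (rev (lst (pact s x))).
Proof.
move=> [t [Ht0 [Hdec Hinc]]].
set W := lst (pact s x).
have HsW : size W = m by rewrite size_lst.
have nthW : forall k (H : k < m), nth false W k = x ((s^-1)%g (Ordinal H)).
  by move=> k H; rewrite nth_lst.
have nthL : forall k (H : k < m), nth false (lst x) k = x (Ordinal H).
  by move=> k H; rewrite nth_lst.
have Inv : forall k, 0 < k <= m -> exists l r, [/\ l <= t < r, r <= m, r - l = k,
   (forall i : 'I_m, (l <= i < r) = (s i < k)) & Pop (slice x l r) (rev (take k W))].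
  elim=> [|k IH] // /andP[_ Hk].
  case: k IH Hk => [|k] IH Hk.
    exists t, t.+1; split => //; try lia.
      move=> i; case: (eqVneq i t) => [->|ne]; first by rewrite Ht0 leqnn ltnSn.
      have ne1 : s i != s t by rewrite (inj_eq perm_inj).
      have ne2 : (s i : nat) != s t by [].
      have ne3 : (i : nat) != t by [].
      rewrite Ht0 in ne2; lia.
    rewrite /slice (_ : t.+1 - t = 1) //; last by lia.
    have H0 : 0 < m by lia.
    rewrite /= (take_nth false) ?HsW // take0 /= (nthW 0 H0).
    have -> : (s^-1)%g (Ordinal H0) = t.
      by apply: (canLR (permK s)); apply: val_inj; rewrite /= Ht0.
    rewrite (nthL t (ltn_ord t)) (_ : Ordinal (ltn_ord t) = t); last by apply: val_inj.
    by constructor; constructor.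
  have [l [r [Hlt Hrm Hrl Hi HP]]] := IH ltac:(lia).
  have Hkm : k.+1 < m by [].
  set kk := Ordinal Hkm.
  set p := (s^-1)%g kk.
  have Hsp : s p = kk by rewrite permKV.
  have Hpn : ~~ (l <= p < r) by rewrite Hi Hsp /= ltnn.
  have Hsi : forall i : 'I_m, i != p -> (s i < k.+2) = (s i < k.+1).
    move=> i ip; rewrite ltnS leq_eqVlt; case: eqP => //= E.
    by exfalso; move/eqP: ip; apply; apply: (@perm_inj _ s); apply: val_inj => /=; rewrite E Hsp.
  case: (ltnP p l) => Hpl.
  - have Hpl' : p.+1 = l.
      case: (ltnP p.+1 l) => // Hpl2; last by lia.
      have Hj : l.-1 < m by lia.
      have := Hdec p (Ordinal Hj); rewrite /= Hsp /= => /(_ _ _).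
      move=> H; have := H ltac:(lia) ltac:(lia); move=> Hsj.
      have := Hi (Ordinal Hj); rewrite /= Hsj; lia.
    exists p, r; split => //; try lia.
      move=> i; case: (eqVneq i p) => [->|ip]; first by rewrite Hsp /= leqnn ltnSn; lia.
      rewrite Hsi // -Hi.
      have : i != p :> nat by [].
      lia.
    rewrite (take_nth false) ?HsW // rev_rcons (sliceL x (_ : p < r)); last by lia.
    rewrite Hpl' (nthW k.+1 Hkm) -/kk -/p (nthL p (ltn_ord p)).
    rewrite (_ : Ordinal (ltn_ord p) = p); last by apply: val_inj.
    by constructor.
  - have Hpr : p = r :> nat.
      case: (ltnP r p) => Hrp; last by lia.
      have Hj : r < m by have := ltn_ord p; lia.
      have := Hinc (Ordinal Hj) p; rewrite /= Hsp /= => H.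
      have Hsj := H ltac:(lia) Hrp.
      have := Hi (Ordinal Hj); rewrite /= Hsj; lia.
    have Hrm' : r < m by rewrite -Hpr.
    exists l, r.+1; split => //; try lia.
      move=> i; case: (eqVneq i p) => [->|ip]; first by rewrite Hsp /= ltnSn Hpr; lia.
      rewrite Hsi // -Hi.
      have : i != p :> nat by [].
      lia.
    rewrite (take_nth false) ?HsW // rev_rcons (sliceR x (_ : l <= r)); last by lia.
    rewrite (nthW k.+1 Hkm) -/kk -/p (nthL r Hrm').
    rewrite (_ : Ordinal Hrm' = p); last by apply: val_inj.
    by constructor.
have Hm : 0 < m by have := ltn_ord t; lia.
have [l [r [Hlt Hrm Hrl Hi HP]]] := Inv m ltac:(lia).
have El : l = 0 by lia.
have Er : r = m by lia.
rewrite El Er slice0m in HP.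
by rewrite (_ : take m W = W) in HP; last by rewrite -{1}HsW take_size.
Qed.


Section L2.
Variable m : nat.
Variable x : 'I_m -> bool.
Let L := lst x.

Definition Good (l r : nat) (pi : nat -> nat) (q : seq bool) :=
  [/\ forall k, k < r - l -> l <= pi k < r,
      forall j, l <= j < r -> exists2 k, k < r - l & pi k = j,
      forall k1 k2, k1 < r - l -> k2 < r - l -> pi k1 = pi k2 -> k1 = k2,
      forall k j, k < r - l -> (pi k <= j <= pi 0) || (pi 0 <= j <= pi k) ->
         exists2 k', k' <= k & pi k' = j
    & rev q = [seq nth false L (pi k) | k <- iota 0 (r - l)]].

Lemma L2gen n : forall l r q, r - l = n -> l <= r -> Pop (slice x l r) q ->
  exists pi, Good l r pi q.
Proof.
elim: n => [|n IH] l r q Hn Hlr HP.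
  have := Pop_perm HP => /perm_size; rewrite size_slice Hn => /esym/size0nil ->.
  exists (fun _ => 0); split.
  - move=> k Hk; lia.
  - move=> j Hj; exfalso; lia.
  - move=> k1 k2 H1; lia.
  - move=> k j Hk; lia.
  - by rewrite Hn.
case: q HP => [|d q] HP.
  by have := Pop_perm HP => /perm_size; rewrite size_slice Hn.
have [[u' Hu Hp]|[u' Hu Hp]] := Pop_inv HP.
- rewrite sliceL in Hu; last by lia.
  case: Hu => Hd Hu; rewrite -Hu in Hp.
  have [pi [A B C D E]] := IH l.+1 r q ltac:(lia) ltac:(lia) Hp.
  exists (fun k => if k == n then l else pi k); split.
  + move=> k Hk; case: eqP => [_|kn]; first by lia.
    have := A k ltac:(lia); lia.
  + move=> j Hj; case: (eqVneq j l) => [->|jl]; first by exists n; rewrite ?eqxx //; lia.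
    have [k Hk Hkj] := B j ltac:(lia).
    by exists k; [lia | rewrite (_ : (k == n) = false) //; apply/eqP; lia].
  + move=> k1 k2 H1 H2.
    case: eqP => [e1|n1]; case: eqP => [e2|n2] //; try lia.
    - by move=> E'; have := A k2 ltac:(lia); lia.
    - by move=> E'; have := A k1 ltac:(lia); lia.
    - by apply: C; lia.
  + move=> k j Hk.
    case: (eqVneq k n) => [->|kn].
      case: (posnP n) => [n0|np].
        rewrite n0 eqxx => Hj; exists 0 => //; rewrite eqxx; lia.
      rewrite (_ : (0 == n) = false); last by apply/eqP; lia.
      move=> Hj; case: (eqVneq j l) => [->|jl]; first by exists n; rewrite ?eqxx.
      have := A 0 ltac:(lia) => A0.
      have [k' Hk' Hkj] := B j ltac:(lia).
      by exists k'; [lia | rewrite (_ : (k' == n) = false) //; apply/eqP; lia].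
    rewrite (_ : (0 == n) = false); last by apply/eqP; lia.
    move=> Hj; have [k' Hk' Hkj] := D k j ltac:(lia) Hj.
    by exists k' => //; rewrite (_ : (k' == n) = false) //; apply/eqP; lia.
  + rewrite Hn -addn1 iotaD map_cat /= add0n eqxx rev_cons -cats1 Hd.
    congr (_ ++ _).
    rewrite (_ : r - l.+1 = n) in E; last by lia.
    rewrite E; apply/eq_in_map => k; rewrite mem_iota => /andP[_ Hk].
    by rewrite (_ : (k == n) = false) //; apply/eqP; lia.
- have Hr : r = r.-1.+1 by lia.
  rewrite Hr sliceR in Hu; last by lia.
  move/rcons_inj: Hu => [Hu Hd]; rewrite -Hu in Hp.
  have [pi [A B C D E]] := IH l r.-1 q ltac:(lia) ltac:(lia) Hp.
  exists (fun k => if k == n then r.-1 else pi k); split.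
  + move=> k Hk; case: eqP => [_|kn]; first by lia.
    have := A k ltac:(lia); lia.
  + move=> j Hj; case: (eqVneq j r.-1) => [->|jl]; first by exists n; rewrite ?eqxx //; lia.
    have [k Hk Hkj] := B j ltac:(lia).
    by exists k; [lia | rewrite (_ : (k == n) = false) //; apply/eqP; lia].
  + move=> k1 k2 H1 H2.
    case: eqP => [e1|n1]; case: eqP => [e2|n2] //; try lia.
    - by move=> E'; have := A k2 ltac:(lia); lia.
    - by move=> E'; have := A k1 ltac:(lia); lia.
    - by apply: C; lia.
  + move=> k j Hk.
    case: (eqVneq k n) => [->|kn].
      case: (posnP n) => [n0|np].
        rewrite n0 eqxx => Hj; exists 0 => //; rewrite eqxx; lia.
      rewrite (_ : (0 == n) = false); last by apply/eqP; lia.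
      move=> Hj; case: (eqVneq j r.-1) => [->|jl]; first by exists n; rewrite ?eqxx.
      have := A 0 ltac:(lia) => A0.
      have [k' Hk' Hkj] := B j ltac:(lia).
      by exists k'; [lia | rewrite (_ : (k' == n) = false) //; apply/eqP; lia].
    rewrite (_ : (0 == n) = false); last by apply/eqP; lia.
    move=> Hj; have [k' Hk' Hkj] := D k j ltac:(lia) Hj.
    by exists k' => //; rewrite (_ : (k' == n) = false) //; apply/eqP; lia.
  + rewrite Hn -addn1 iotaD map_cat /= add0n eqxx rev_cons -cats1 Hd.
    congr (_ ++ _).
    rewrite (_ : r.-1 - l = n) in E; last by lia.
    rewrite E; apply/eq_in_map => k; rewrite mem_iota => /andP[_ Hk].
    by rewrite (_ : (k == n) = false) //; apply/eqP; lia.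
Qed.

End L2.


Lemma L2 m (x : 'I_m -> bool) q : 0 < m -> Pop (lst x) q ->
  exists s : 'S_m, Tperm s /\ lst (pact s x) = rev q.
Proof.
move=> Hm HP.
rewrite -slice0m in HP.
have [pi [A B C D E]] := L2gen (erefl _) (leq0n m) HP.
rewrite subn0 in A B C D E.
have fA : forall k : 'I_m, pi k < m by move=> k; have := A k (ltn_ord k); lia.
pose f (k : 'I_m) := Ordinal (fA k).
have finj : injective f.
  by move=> k1 k2 /(congr1 val) /= /C H; apply: val_inj; apply: H.
pose P := perm finj.
have PE : forall k, P k = f k by move=> k; rewrite permE.
exists (P^-1)%g; split.
  pose k0 := Ordinal Hm.
  exists (P k0); split; [|split].
  - by rewrite permK.
  - move=> i j ij jt.
    set ki := (P^-1)%g i.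
    have Pki : P ki = i by rewrite permKV.
    have Hpi : pi ki = i by rewrite -Pki PE.
    have Ht : pi 0 = P k0 by rewrite PE.
    have [k' Hk' Hkj] := D ki j (ltn_ord ki) ltac:(apply/orP; left; lia).
    have Hk'm : k' < m by have := ltn_ord ki; lia.
    have Pk' : P (Ordinal Hk'm) = j by apply: val_inj; rewrite PE /= Hkj.
    have -> : (P^-1)%g j = Ordinal Hk'm by rewrite -Pk' permK.
    rewrite /= ltn_neqAle Hk' andbT; apply/eqP => Ek.
    have : pi k' = pi ki by rewrite Ek.
    lia.
  - move=> i j ti ij.
    set kj := (P^-1)%g j.
    have Pkj : P kj = j by rewrite permKV.
    have Hpi : pi kj = j by rewrite -Pkj PE.
    have Ht : pi 0 = P k0 by rewrite PE.
    have [k' Hk' Hkj] := D kj i (ltn_ord kj) ltac:(apply/orP; right; lia).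
    have Hk'm : k' < m by have := ltn_ord kj; lia.
    have Pk' : P (Ordinal Hk'm) = i by apply: val_inj; rewrite PE /= Hkj.
    have -> : (P^-1)%g i = Ordinal Hk'm by rewrite -Pk' permK.
    rewrite /= ltn_neqAle Hk' andbT; apply/eqP => Ek.
    have : pi k' = pi kj by rewrite Ek.
    lia.
rewrite E; apply: (@eq_from_nth _ false); first by rewrite size_lst size_map size_iota.
move=> k; rewrite size_lst => Hk.
rewrite nth_lst (nth_map 0) ?size_iota // nth_iota // add0n.
rewrite (nth_lst x (fA (Ordinal Hk))) /pact invgK PE.
by congr x; apply: val_inj.
Qed.

Unset Implicit Arguments.

Theorem mainTheorem18 (S : Type) (m : nat) (s s' : 'I_m -> S) :
  mirrored s s' -> special s s'.
Proof.
move=> [M1 M2] A [i0 Hi0].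
have Hm : 0 < m by have := ltn_ord i0; lia.
pose f (z : S) : bool := if excluded_middle_informative (z = A) then true else false.
have fT : forall z, f z = true <-> z = A.
  by move=> z; rewrite /f; case: excluded_middle_informative.
pose x := fun i => f (s i).
pose y := fun i => f (s' i).
have Mx : forall sg : 'S_m, Tperm sg -> exists2 sg' : 'S_m, Tperm sg' & pact sg x = pact sg' y.
  move=> sg Hsg; have [sg' [Hsg' E]] := M1 sg Hsg; exists sg' => //.
  exact: (congr1 (fun g => fun i => f (g i)) E).
have My : forall sg : 'S_m, Tperm sg -> exists2 sg' : 'S_m, Tperm sg' & pact sg y = pact sg' x.
  move=> sg Hsg; have [sg' [Hsg' E]] := M2 sg Hsg; exists sg' => //.
  exact: (congr1 (fun g => fun i => f (g i)) E).
have HP : PEq (lst x) (lst y).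
  move=> q; split.
    move=> /(L2 Hm) [sg [Hsg E]]; have [sg' Hsg' E'] := Mx sg Hsg.
    by have := L1 y Hsg'; rewrite -E' E revK.
  move=> /(L2 Hm) [sg [Hsg E]]; have [sg' Hsg' E'] := My sg Hsg.
  by have := L1 x Hsg'; rewrite -E' E revK.
have [E|E] := core (leqnn _) HP.
  left => i Hi; apply/fT.
  have := congr1 (nth false) E => /(congr1 (fun g => g (nat_of_ord i))).
  rewrite !(nth_lst _ (ltn_ord i)) (_ : Ordinal (ltn_ord i) = i); last by apply: val_inj.
  by rewrite /y /x => ->; apply/fT.
right => i Hi; apply/fT; rewrite /rev_seq.
have := congr1 (fun l => nth false l (rev_ord i)) E.
rewrite nth_rev ?size_lst ?ltn_ord //.
have -> : m - (rev_ord i).+1 = i by rewrite /=; have := ltn_ord i; lia.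
rewrite !(nth_lst _ (ltn_ord _)).
rewrite (_ : Ordinal (ltn_ord i) = i); last by apply: val_inj.
rewrite (_ : Ordinal (ltn_ord (rev_ord i)) = rev_ord i); last by apply: val_inj.
by rewrite /y /x => ->; apply/fT.
Qed.
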